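(* Let $p,q$ be positive integers and $A\in\mathbb{R}^{(p+q)\times(p+q)}$. Let $J=\begin{bmatrix}E&0\\0&-I\end{bmatrix}$, where $E$ is the $p\times p$ matrix with all entries $1$ and $I$ is the $q\times q$ identity. If there exists $\lambda\ge0$ such that $A^\top JA-\lambda J$ is positive semidefinite, and the transposes of the first $p$ rows of $A$ belong to $L(p,q)$, then $A$ is a positive operator of $M(p,q)$, i.e. $A\,M(p,q)\subseteq M(p,q)$.
   Context: Let $e=(1,\dots,1)\in\mathbb{R}^p$. Identify $\mathbb{R}^p\times\mathbb{R}^q$ with $\mathbb{R}^{p+q}$ (column vectors) with the standard inner product $\langle\cdot,\cdot\rangle$ and Euclidean norm $\|\cdot\|$. Define \[L(p,q)=\{(x,u)\in\mathbb{R}^p\times\mathbb{R}^q:\ x\ge\|u\|e\}\] (componentwise inequality) and \[M(p,q)=\{(x,u)\in\mathbb{R}^p\times\mathbb{R}^q:\ \langle x,e\rangle\ge\|u\|,\ x\ge 0\}.\] A matrix $A$ is a positive operator of a cone $C$ if $AC\subseteq C$. *)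

(* Defs.v *)
From HB Require Import structures.
From mathcomp Require Import all_boot all_order all_algebra.
From mathcomp Require Import reals.
Set Implicit Arguments. Unset Strict Implicit. Unset Printing Implicit Defensive.
Import Order.TTheory GRing.Theory Num.Theory.
Local Open Scope ring_scope.

Definition enorm (R : realType) (q : nat) (u : 'cV[R]_q) : R :=
  Num.sqrt (\sum_(i < q) u i 0 ^+ 2).

Definition inL (R : realType) (p q : nat) (v : 'cV[R]_(p + q)) : Prop :=
  forall i : 'I_p, enorm (dsubmx v) <= usubmx v i 0.

Definition inM (R : realType) (p q : nat) (v : 'cV[R]_(p + q)) : Prop :=
  enorm (dsubmx v) <= \sum_(i < p) usubmx v i 0 /\
  forall i : 'I_p, 0 <= usubmx v i 0.

Definition Jmx (R : realType) (p q : nat) : 'M[R]_(p + q) :=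
  block_mx (const_mx 1) 0 0 (- 1%:M).

Definition psd (R : realType) (n : nat) (S : 'M[R]_n) : Prop :=
  forall x : 'cV[R]_n, 0 <= (x^T *m S *m x) 0 0.

Definition positive_operator (R : realType) (n : nat)
  (C : 'cV[R]_n -> Prop) (A : 'M[R]_n) : Prop :=
  forall v, C v -> C (A *m v).

(* Main.v *)
Require Import Defs.
From HB Require Import structures.
From mathcomp Require Import all_boot all_order all_algebra.
From mathcomp Require Import reals.
From mathcomp Require Import ring lra.
Import Order.TTheory GRing.Theory Num.Theory.
Local Open Scope ring_scope.
Lemma CS (R : realType) n (b u : 'I_n -> R) :
  (\sum_i b i * u i)^+2 <= (\sum_i b i ^+2) * (\sum_i u i ^+2).
Proof.
set F := fun i j => b i ^+ 2 * u j ^+ 2 - (b i * u i) * (b j * u j).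
have H : 0 <= \sum_i \sum_j (F i j + F j i).
  apply: sumr_ge0 => i _; apply: sumr_ge0 => j _.
  have -> : F i j + F j i = (b i * u j - b j * u i) ^+ 2 by rewrite /F; ring.
  exact: sqr_ge0.
have E1 : \sum_i \sum_j (F i j + F j i) = \sum_i \sum_j F i j + \sum_i \sum_j F j i.
  rewrite -big_split /=; apply: eq_bigr => i _; by rewrite big_split.
have E2 : \sum_i \sum_j F j i = \sum_i \sum_j F i j by rewrite exchange_big.
have E3 : \sum_i \sum_j F i j = (\sum_i b i ^+2) * (\sum_i u i ^+2) - (\sum_i b i * u i)^+2.
  rewrite expr2 !big_distrlr /= -sumrB; apply: eq_bigr => i _.
  by rewrite -sumrB.
rewrite E1 E2 E3 in H; lra.
Qed.

Lemma CS' (R : realType) n (b u : 'I_n -> R) :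
  - (Num.sqrt (\sum_i b i ^+2) * Num.sqrt (\sum_i u i ^+2)) <= \sum_i b i * u i.
Proof.
have hb : 0 <= \sum_i b i ^+2 by apply: sumr_ge0 => i _; apply: sqr_ge0.
rewrite -sqrtrM // lerNl.
apply: le_trans (ler_norm _) _.
rewrite normrN -sqrtr_sqr ler_sqrt; last by apply: mulr_ge0 => //; apply: sumr_ge0 => i _; apply: sqr_ge0.
exact: CS.
Qed.

Lemma Jform0 (R : realType) p q (u : 'cV[R]_p) (d : 'cV[R]_q) :
  ((col_mx u d)^T *m Jmx R p q *m col_mx u d) 0 0 =
  (\sum_i u i 0)^+2 - \sum_k d k 0 ^+2.
Proof.
rewrite tr_col_mx /Jmx mul_row_block ?mul0mx ?mulmx0 ?addr0 ?add0r mul_row_col mxE.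
rewrite mulmxN mulmx1 mulNmx mxE.
rewrite !mxE expr2 big_distrlr /=.
congr (_ - _).
  apply: eq_bigr => i _; rewrite !mxE mulr_suml; apply: eq_bigr => j _.
  by rewrite !mxE mulr1 mulrC.
apply: eq_bigr => k _; by rewrite !mxE expr2.
Qed.

Lemma Jform (R : realType) p q (w : 'cV[R]_(p+q)) :
  (w^T *m Jmx R p q *m w) 0 0 =
  (\sum_i w (lshift q i) 0)^+2 - \sum_k w (rshift p k) 0 ^+2.
Proof.
rewrite -{1 2}[w]vsubmxK Jform0.
congr (_ ^+ 2 - _); apply: eq_bigr => i _; by rewrite mxE.
Qed.

Lemma dsubE (R : realType) p q (w : 'cV[R]_(p+q)) k : dsubmx w k 0 = w (rshift p k) 0.
Proof. by rewrite mxE. Qed.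
Lemma usubE (R : realType) p q (w : 'cV[R]_(p+q)) k : usubmx w k 0 = w (lshift q k) 0.
Proof. by rewrite mxE. Qed.
Lemma mulE (R : realType) p q (A : 'M[R]_(p+q)) (v : 'cV[R]_(p+q)) r :
  (A *m v) r 0 = \sum_j A r (lshift q j) * v (lshift q j) 0
               + \sum_k A r (rshift p k) * v (rshift p k) 0.
Proof. by rewrite mxE big_split_ord. Qed.

Theorem mainTheorem3 (R : realType) (p q : nat) (hp : (0 < p)%N) (hq : (0 < q)%N)
  (A : 'M[R]_(p + q)) :
  (exists lambda : R, 0 <= lambda /\
     psd (A^T *m Jmx R p q *m A - lambda *: Jmx R p q)) ->
  (forall i : 'I_p, inL (row (lshift q i) A)^T) ->
  positive_operator (@inM R p q) A.
Proof.
move=> [lam [hlam hpsd]] hL v [hnorm hpos].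
set x := fun j : 'I_p => v (lshift q j) 0.
set u := fun k : 'I_q => v (rshift p k) 0.
have hx : forall i, 0 <= x i by move=> i; have := hpos i; rewrite usubE.
have hU : 0 <= \sum_k u k ^+ 2 by apply: sumr_ge0 => k _; apply: sqr_ge0.
have hsum : Num.sqrt (\sum_k u k ^+ 2) <= \sum_i x i.
  move: hnorm; rewrite /enorm.
  rewrite (eq_bigr (fun k => u k ^+ 2)); last by move=> k _; rewrite dsubE.
  by rewrite (eq_bigr x) //; move=> i _; rewrite usubE.
set beta := fun i : 'I_p => Num.sqrt (\sum_k A (lshift q i) (rshift p k) ^+ 2).
have hL' : forall i j, beta i <= A (lshift q i) (lshift q j).
  move=> i j; have := hL i j; rewrite /enorm usubE !mxE.
  rewrite (eq_bigr (fun k => A (lshift q i) (rshift p k) ^+ 2)) //.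
  by move=> k _; rewrite dsubE !mxE.
have hy : forall i, 0 <= (A *m v) (lshift q i) 0.
  move=> i; rewrite mulE.
  have h1 : beta i * \sum_j x j <= \sum_j A (lshift q i) (lshift q j) * v (lshift q j) 0.
    rewrite mulr_sumr; apply: ler_sum => j _; apply: ler_wpM2r; [exact: hx | exact: hL'].
  have h2 := @CS' R q (fun k => A (lshift q i) (rshift p k)) u.
  have h3 : beta i * Num.sqrt (\sum_k u k ^+ 2) <= beta i * \sum_j x j.
    by apply: ler_wpM2l => //; apply: sqrtr_ge0.
  rewrite /= -/(beta i) in h2.
  lra.
split; last by move=> i; rewrite usubE.
rewrite /enorm.
rewrite (eq_bigr (fun k => (A *m v) (rshift p k) 0 ^+ 2)); last by move=> k _; rewrite dsubE.
rewrite (eq_bigr (fun i => (A *m v) (lshift q i) 0)); last by move=> i _; rewrite usubE.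
set y := \sum_i (A *m v) (lshift q i) 0.
set W := \sum_k (A *m v) (rshift p k) 0 ^+ 2.
have hy0 : 0 <= y by apply: sumr_ge0 => i _; apply: hy.
have key : (v^T *m (A^T *m Jmx R p q *m A - lam *: Jmx R p q) *m v) 0 0 =
   ((A *m v)^T *m Jmx R p q *m (A *m v)) 0 0 - lam * (v^T *m Jmx R p q *m v) 0 0.
  rewrite mulmxBr mulmxBl -scalemxAr -scalemxAl trmx_mul !mulmxA.
  by rewrite [in LHS]mxE [X in _ + X]mxE [X in - X]mxE.
have hP := hpsd v; rewrite key !Jform -/y -/W in hP.
have hV : 0 <= lam * ((\sum_i x i) ^+ 2 - \sum_k u k ^+ 2).
  apply: mulr_ge0 => //; rewrite subr_ge0 -(sqr_sqrtr hU).
  have := sqrtr_ge0 (\sum_k u k ^+ 2); move: hsum.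
  set s := Num.sqrt _; set X := \sum_i x i; move=> h1 h2; nra.
have hW : W <= y ^+ 2 by lra.
rewrite -(ger0_norm hy0) -sqrtr_sqr ler_sqrt //; exact: sqr_ge0.
Qed.
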